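(* Let $c_{gap}(\ell)$ denote the spectral gap of the heat-bath Glauber dynamics for proper $k$-colorings of the complete tree of height $\ell$ with branching factor $b$, whose root is additionally adjacent to an external vertex with a fixed color. Then for every $\ell>0$ and $k\le b+2$, $c_{gap}(\ell)\le c_{gap}(\ell-1)$.
   Context: Spectral gap $c_{gap}=\inf_f\mathcal D(f)/\mathrm{Var}(f)$ over non-constant $f$, with Dirichlet form $\mathcal D(f)=\frac12\sum_{\sigma,\sigma'}(f(\sigma)-f(\sigma'))^2\pi(\sigma)P(\sigma,\sigma')$ and $\mathrm{Var}$ the variance under the stationary distribution $\pi$ (uniform on proper colorings consistent with the fixed external color). The heat-bath Glauber dynamics chooses a uniformly random (non-external) vertex and recolors it uniformly among colors not used by its neighbors. The tree of height $0$ is a single vertex adjacent to the external vertex. *)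

(* Defs.v *)
From HB Require Import structures.
From mathcomp Require Import all_boot all_order all_algebra.
From mathcomp Require Import all_classical all_reals.
From mathcomp Require Import ereal.
Set Implicit Arguments. Unset Strict Implicit. Unset Printing Implicit Defensive.
Import Order.TTheory GRing.Theory Num.Theory.
Local Open Scope ring_scope.
Local Open Scope classical_set_scope.

(* Vertices of the complete tree of height l with branching factor b:
   words over 'I_b of length d <= l (the word is the path from the root). *)
Definition vtx (b l : nat) := {d : 'I_l.+1 & (d : nat).-tuple 'I_b}.

Section Glauber.
Variables (R : realType) (b k l : nat) (c : 'I_k).
(* c = the fixed colour of the external vertex adjacent to the root *)

Definition vseq (v : vtx b l) : seq 'I_b := val (tagged v).
Definition is_root (v : vtx b l) : bool := vseq v == [::].
Definition child (u v : vtx b l) : bool := [exists i : 'I_b, vseq v == rcons (vseq u) i].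
Definition adj (u v : vtx b l) : bool := child u v || child v u.

Definition coloring := {ffun vtx b l -> 'I_k}.

Definition proper (s : coloring) : bool :=
  [forall v, is_root v ==> (s v != c)] &&
  [forall u, forall v, adj u v ==> (s u != s v)].

Definition Omega : {set coloring} := [set s | proper s].

Definition allowed (s : coloring) (v : vtx b l) : {set 'I_k} :=
  [set a : 'I_k | (~~ is_root v || (a != c)) && [forall u, adj u v ==> (s u != a)]].

Definition upd (s : coloring) (v : vtx b l) (a : 'I_k) : coloring :=
  [ffun u => if u == v then a else s u].

Definition P (s s' : coloring) : R :=
  (#|{: vtx b l}|%:R)^-1 *
  \sum_(v : vtx b l) (#|allowed s v|%:R)^-1 *
     \sum_(a in allowed s v) ((s' == upd s v a)%:R : R).

Definition pi (s : coloring) : R := if s \in Omega then (#|Omega|%:R)^-1 else 0.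

Definition Dir (f : coloring -> R) : R :=
  2^-1 * \sum_(s in Omega) \sum_(s' in Omega) (f s - f s') ^+ 2 * pi s * P s s'.

Definition Mean (f : coloring -> R) : R := \sum_(s in Omega) pi s * f s.
Definition Var (f : coloring -> R) : R := \sum_(s in Omega) pi s * (f s - Mean f) ^+ 2.

Definition nonconst (f : coloring -> R) : Prop :=
  exists s, exists s', [/\ s \in Omega, s' \in Omega & f s != f s'].

(* spectral gap, as an extended real (+oo if there is no non-constant f) *)
Definition c_gap : \bar R :=
  ereal_inf [set ((Dir f / Var f)%:E) | f in [set f | nonconst f]].

End Glauber.

(* Main.v *)
Require Import Defs.
From mathcomp Require Import all_boot all_order all_algebra.
From mathcomp Require Import all_classical all_reals.
From mathcomp Require Import ereal.
From mathcomp Require Import zify.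
Set Implicit Arguments. Unset Strict Implicit. Unset Printing Implicit Defensive.
Import Order.TTheory GRing.Theory Num.Theory.
Local Open Scope ring_scope.

Definition mkv b L (t : seq 'I_b) (H : (size t < L.+1)%N) : vtx b L :=
  existT (fun d : 'I_L.+1 => (d : nat).-tuple 'I_b) (Ordinal H)
    (@Tuple (size t) _ t (eqxx _)).

Lemma vseq_mkv b L t H : vseq (@mkv b L t H) = t.
Proof. by []. Qed.

Lemma vtx_eq b L (u v : vtx b L) : vseq u = vseq v -> u = v.
Proof.
case: u => [d t]; case: v => [d' t']; rewrite /vseq /= => E.
have edd : d = d' by apply: val_inj; rewrite /= -(size_tuple t) -(size_tuple t') E.
subst d'; congr existT; exact: val_inj.
Qed.

Lemma size_vseq b L (v : vtx b L) : (size (vseq v) <= L)%N.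
Proof. by rewrite /vseq size_tuple -ltnS ltn_ord. Qed.

Lemma child_size b L (u v : vtx b L) : child u v -> size (vseq v) = (size (vseq u)).+1.
Proof. by case/existsP => i /eqP ->; rewrite size_rcons. Qed.

Lemma adj_irr b L (v : vtx b L) : ~~ adj v v.
Proof.
rewrite /adj orbb; apply/negP => /child_size /eqP; by rewrite -[X in X == _]addn0 -addn1 eqn_add2l.
Qed.

Lemma adjC b L (u v : vtx b L) : adj u v = adj v u.
Proof. by rewrite /adj orbC. Qed.

Section Gen.
Variables (R : realType) (b k L : nat) (c : 'I_k).

Lemma upd_Omega (s : coloring b k L) v a :
  s \in Omega b L c -> a \in allowed c s v -> upd s v a \in Omega b L c.
Proof.
rewrite !inE => /andP [/forallP Hr /forallP Ha] /andP [Hra /forallP Hna].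
apply/andP; split.
  apply/forallP => u; apply/implyP => ru; rewrite /upd ffunE.
  case: ifP => [/eqP E|_]; last by have := Hr u; rewrite ru.
  by move: Hra; rewrite -E ru.
apply/forallP => u1; apply/forallP => u2; apply/implyP => a12; rewrite /upd !ffunE.
case: ifP => [/eqP e1|/negbT n1]; case: ifP => [/eqP e2|/negbT n2].
- by move: a12; rewrite e1 e2 (negbTE (adj_irr _)).
- by rewrite eq_sym; have := Hna u2; rewrite adjC -e1 a12.
- by have := Hna u1; rewrite -e2 a12.
- by have := forallP (Ha u1) u2; rewrite a12.
Qed.

Lemma own_allowed (s : coloring b k L) v : s \in Omega b L c -> s v \in allowed c s v.
Proof.
rewrite !inE => /andP [/forallP Hr /forallP Ha]; apply/andP; split.
  by case: (is_root v) (Hr v).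
apply/forallP => u; apply/implyP => auv.
by have := forallP (Ha u) v; rewrite auv.
Qed.

Lemma allowed_lt (s : coloring b k L) v : (#|allowed c s v| < k)%N.
Proof.
have [a Ha] : exists a, a \notin allowed c s v.
  case: (boolP (is_root v)) => rv.
    by exists c; rewrite inE rv eqxx.
  have sz : (0 < size (vseq v))%N.
    by move: rv; rewrite /is_root; case: (vseq v).
  have : exists (t : seq 'I_b) (x : 'I_b), vseq v = rcons t x.
    case: (vseq v) sz => [//|y t' _]; exists (belast y t'), (last y t').
    by rewrite -lastI.
  case=> t [x et].
  have Ht : (size t < L.+1)%N.
    by move: (size_vseq v); rewrite et size_rcons => /ltnW.
  exists (s (mkv Ht)); rewrite inE negb_and; apply/orP; right.
  rewrite negb_forall; apply/existsP; exists (mkv Ht).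
  rewrite eqxx /adj /child implybF negbK; apply/orP; left.
  by apply/existsP; exists x; rewrite et.
have : allowed c s v \proper [set: 'I_k].
  by apply/properP; split; [exact: finset.subsetT | exists a].
by move/proper_card; rewrite cardsT card_ord.
Qed.


Definition Q (h : coloring b k L -> R) (s : coloring b k L) : R :=
  \sum_(s' in Omega b L c) (h s - h s') ^+ 2 * P R c s s'.

Lemma Dir_Q h : Dir c h = 2^-1 * \sum_(s in Omega b L c) Defs.pi R c s * Q h s.
Proof.
rewrite /Dir; congr (_ * _); apply: eq_bigr => s _; rewrite /Q mulr_sumr.
by apply: eq_bigr => s' _; rewrite mulrAC mulrC mulrA.
Qed.

Lemma sum_pick (X : coloring b k L -> R) t : t \in Omega b L c ->
  \sum_(s' in Omega b L c) X s' * (s' == t)%:R = X t.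
Proof.
move=> Ht; rewrite (bigD1 t) //= eqxx mulr1 big1 ?addr0 // => s' /andP [_ /negbTE ->].
by rewrite mulr0.
Qed.

Lemma Q_eq h s : s \in Omega b L c ->
  Q h s = (#|{: vtx b L}|%:R)^-1 * \sum_v (#|allowed c s v|%:R)^-1 *
     \sum_(a in allowed c s v) (h s - h (upd s v a)) ^+ 2.
Proof.
move=> Hs; rewrite /Q /P.
under eq_bigr do rewrite mulrCA.
rewrite -mulr_sumr; congr (_ * _).
under eq_bigr do rewrite big_distrr /=.
rewrite exchange_big /=; apply: eq_bigr => v _.
under eq_bigr do rewrite mulrCA.
rewrite -mulr_sumr; congr (_ * _).
rewrite (eq_bigr (fun i => \sum_(a in allowed c s v) (h s - h i)^+2 * (i == upd s v a)%:R)); last by move=> i _; rewrite mulr_sumr.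
rewrite exchange_big /=; apply: eq_bigr => a Ha.
exact: sum_pick (upd_Omega Hs Ha).
Qed.

End Gen.

Lemma Om_intro b k L (c : 'I_k) (s : coloring b k L) :
  (forall u, is_root u -> s u != c) -> (forall u v, child u v -> s u != s v) ->
  s \in Omega b L c.
Proof.
move=> Hr Hc; rewrite inE; apply/andP; split.
  by apply/forallP => u; apply/implyP; exact: Hr.
apply/forallP => u; apply/forallP => v; apply/implyP => /orP [/Hc //|/Hc].
by rewrite eq_sym.
Qed.

Lemma Om_root b k L (c : 'I_k) (s : coloring b k L) u :
  s \in Omega b L c -> is_root u -> s u != c.
Proof. by rewrite inE => /andP [/forallP H _] ru; have := H u; rewrite ru. Qed.

Lemma Om_adj b k L (c : 'I_k) (s : coloring b k L) u v :
  s \in Omega b L c -> adj u v -> s u != s v.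
Proof. by rewrite inE => /andP [_ /forallP H] a; have := forallP (H u) v; rewrite a. Qed.

Lemma child_adj b L (u v : vtx b L) : child u v -> adj u v.
Proof. by rewrite /adj => ->. Qed.

Section Lvl.
Variables (b k m : nat).

Lemma emb_pf (w : vtx b m) : (size (vseq w) < m.+2)%N.
Proof. exact: leqW (size_vseq w). Qed.
Definition emb (w : vtx b m) : vtx b m.+1 := mkv (emb_pf w).

Lemma proj_pf (t : seq 'I_b) : (size (take m t) < m.+1)%N.
Proof. by rewrite ltnS size_take_min geq_minl. Qed.
Definition proj (v : vtx b m.+1) : vtx b m := mkv (proj_pf (vseq v)).

Definition small (v : vtx b m.+1) := (size (vseq v) <= m)%N.

Lemma vseq_emb w : vseq (emb w) = vseq w. Proof. by []. Qed.
Lemma vseq_proj v : vseq (proj v) = take m (vseq v). Proof. by []. Qed.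

Lemma emb_inj : injective emb.
Proof. by move=> u v /(congr1 (@vseq b m.+1)); rewrite !vseq_emb => /vtx_eq. Qed.

Lemma proj_emb w : proj (emb w) = w.
Proof. by apply: vtx_eq; rewrite vseq_proj vseq_emb take_oversize // size_vseq. Qed.

Lemma small_emb w : small (emb w).
Proof. by rewrite /small vseq_emb size_vseq. Qed.

Lemma emb_proj v : small v -> emb (proj v) = v.
Proof. by move=> sv; apply: vtx_eq; rewrite vseq_emb vseq_proj take_oversize. Qed.

Lemma child_emb u w : child (emb u) (emb w) = child u w.
Proof. by []. Qed.
Lemma adj_emb u w : adj (emb u) (emb w) = adj u w.
Proof. by []. Qed.
Lemma root_emb w : is_root (emb w) = is_root w.
Proof. by []. Qed.

Lemma nsmall_size v : ~~ small v -> size (vseq v) = m.+1.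
Proof. by rewrite /small -ltnNge => h; apply/eqP; rewrite eqn_leq h size_vseq. Qed.

Lemma child_proj v : ~~ small v -> child (emb (proj v)) v.
Proof.
move=> /nsmall_size sz; apply/existsP.
move: sz; case/lastP E: (vseq v) => [//|t x]; rewrite size_rcons => [[st]].
by exists x; rewrite vseq_emb vseq_proj E -cats1 take_size_cat // cats1.
Qed.

Lemma child_cases (u v : vtx b m.+1) : child u v ->
  (small u /\ small v /\ child (proj u) (proj v)) \/ (~~ small v /\ u = emb (proj v)).
Proof.
case/existsP => i /eqP e.
have su : small u.
  by rewrite /small -ltnS; move: (size_vseq v); rewrite e size_rcons.
case: (boolP (small v)) => sv; [left|right].
  do 2!split => //; apply/existsP; exists i.
  by rewrite !vseq_proj !take_oversize // e.
split => //; apply: vtx_eq; rewrite vseq_emb vseq_proj e -cats1 take_size_cat //.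
by move: (nsmall_size sv); rewrite e size_rcons => [[]].
Qed.

Lemma small_root v : is_root v -> small v.
Proof. by rewrite /is_root /small => /eqP ->. Qed.

Lemma proj_root v : is_root v -> is_root (proj v).
Proof. by rewrite /is_root vseq_proj => /eqP ->. Qed.

End Lvl.

Definition swp k (x y z : 'I_k) := if z == x then y else if z == y then x else z.

Lemma swpK k (x y : 'I_k) : cancel (swp x y) (swp x y).
Proof.
move=> z; rewrite /swp.
case: (eqVneq z x) => [->|zx]; first by rewrite eqxx; case: eqP.
case: (eqVneq z y) => [->|zy]; first by rewrite eqxx.
by rewrite (negbTE zx) (negbTE zy).
Qed.

Lemma swp_neq k (x y z : 'I_k) : z != x -> swp x y z != y.
Proof.
move=> zx; rewrite /swp (negbTE zx); case: (eqVneq z y) => // e.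
by move: zx; rewrite e eq_sym.
Qed.

Section Col.
Variables (R : realType) (b k m : nat) (c : 'I_k).

Definition r (s : coloring b k m.+1) : coloring b k m := [ffun w => s (emb w)].

Lemma rE s w : r s w = s (emb w). Proof. by rewrite ffunE. Qed.

Lemma r_Omega s : s \in Omega b m.+1 c -> r s \in Omega b m c.
Proof.
move=> Hs; apply: Om_intro => [u ru|u v cuv]; rewrite !rE.
  by apply: Om_root Hs _; rewrite root_emb.
by apply: Om_adj Hs _; apply: child_adj; rewrite child_emb.
Qed.

Lemma r_upd_emb s w a : r (upd s (emb w) a) = upd (r s) w a.
Proof.
apply/ffunP => u; rewrite /upd !ffunE.
by rewrite (inj_eq (@emb_inj b m)).
Qed.

Lemma r_upd_nsmall s v a : ~~ small v -> r (upd s v a) = r s.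
Proof.
move=> nv; apply/ffunP => u; rewrite /upd !ffunE.
case: eqP => // e; by move: nv; rewrite -e small_emb.
Qed.

Lemma allowed_sub s w : allowed c s (emb w) \subset allowed c (r s) w.
Proof.
apply/fintype.subsetP => a; rewrite !inE root_emb => /andP [-> /forallP H] /=.
apply/forallP => u; apply/implyP => auw; rewrite rE.
by have := H (emb u); rewrite adj_emb auw.
Qed.

Lemma allowed_sup s w : (size (vseq w) < m)%N ->
  allowed c (r s) w \subset allowed c s (emb w).
Proof.
move=> sw; apply/fintype.subsetP => a; rewrite !inE root_emb => /andP [-> /forallP H] /=.
apply/forallP => u; apply/implyP => auw.
have su : small u.
  move: auw; rewrite /adj => /orP [/child_size|/child_size]; rewrite vseq_emb /small.
    by move=> e; apply: leq_trans (ltnW sw); rewrite e.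
  by move=> e; rewrite e.
have := H (proj u); rewrite rE emb_proj // -adj_emb emb_proj // auw.
by [].
Qed.

Definition ext_of (t : coloring b k m) (G : vtx b m.+1 -> 'I_k) : coloring b k m.+1 :=
  [ffun v => if small v then t (proj v) else G v].

Lemma build t G : t \in Omega b m c -> (forall v, ~~ small v -> G v != t (proj v)) ->
  ext_of t G \in Omega b m.+1 c /\ r (ext_of t G) = t.
Proof.
move=> Ht HG; split; last first.
  by apply/ffunP => w; rewrite rE ffunE small_emb proj_emb.
apply: Om_intro => [u ru|u v cuv]; rewrite !ffunE.
  by rewrite small_root //; apply: Om_root Ht _; apply: proj_root.
case: (child_cases cuv) => [[su [sv cp]]|[nsv eu]].
  by rewrite su sv; apply: Om_adj Ht _; apply: child_adj.
by rewrite eu small_emb proj_emb (negbTE nsv) eq_sym HG.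
Qed.

Definition fib (t : coloring b k m) := [set s in Omega b m.+1 c | r s == t].

Lemma leaf_neq s v : s \in Omega b m.+1 c -> ~~ small v -> s v != r s (proj v).
Proof.
move=> Hs nv; rewrite rE eq_sym; apply: Om_adj Hs _; apply: child_adj.
exact: child_proj.
Qed.

Lemma fib_le t1 t2 : t1 \in Omega b m c -> t2 \in Omega b m c ->
  (#|fib t1| <= #|fib t2|)%N.
Proof.
move=> H1 H2.
pose T (s : coloring b k m.+1) := ext_of t2 (fun v => swp (t1 (proj v)) (t2 (proj v)) (s v)).
have HT s : s \in fib t1 -> T s \in Omega b m.+1 c /\ r (T s) = t2.
  rewrite inE => /andP [Hs /eqP rs]; apply: build => // v nv.
  by apply: swp_neq; rewrite -rs leaf_neq.
rewrite -(card_in_imset (f := T) (D := mem (fib t1))).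
  apply: subset_leq_card; apply/fintype.subsetP => _ /imsetP [s Hs ->].
  by have [? e] := HT s Hs; rewrite inE e eqxx andbT.
move=> s1 s2 Hs1 Hs2 E; apply/ffunP => v.
have := congr1 (fun F : coloring b k m.+1 => F v) E; rewrite /T !ffunE.
move: Hs1 Hs2; rewrite !inE => /andP [_ /eqP r1] /andP [_ /eqP r2].
case: (boolP (small v)) => sv.
  move=> _; rewrite -(emb_proj sv) -!rE r1 r2 //.
by move/(can_inj (swpK _ _)).
Qed.

Lemma fib_eq t1 t2 : t1 \in Omega b m c -> t2 \in Omega b m c -> #|fib t1| = #|fib t2|.
Proof. by move=> H1 H2; apply/eqP; rewrite eqn_leq !fib_le. Qed.

Definition rtm : vtx b m := @mkv b m [::] (ltn0Sn m).

Lemma fib_pos t : t \in Omega b m c -> (0 < #|fib t|)%N.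
Proof.
move=> Ht; apply/card_gt0P.
pose oth (x : 'I_k) := if x == c then t rtm else c.
have HG : forall v, ~~ small v -> oth (t (proj v)) != t (proj v).
  move=> v _; rewrite /oth; case: ifP => [/eqP ->|/negbT]; last by rewrite eq_sym.
  by apply: Om_root Ht _; rewrite /is_root.
have [H1 H2] := build Ht HG.
by exists (ext_of t (fun v => oth (t (proj v)))); rewrite inE H1 H2 eqxx.
Qed.

Lemma sum_fib (F : coloring b k m -> R) :
  \sum_(s in Omega b m.+1 c) F (r s) = \sum_(t in Omega b m c) #|fib t|%:R * F t.
Proof.
rewrite (partition_big r (mem (Omega b m c))) /=; last exact: r_Omega.
apply: eq_bigr => t Ht.
rewrite (eq_bigl (fun s => s \in fib t)); last by move=> s; rewrite /= !inE.
rewrite (eq_bigr (fun _ => F t)); last by move=> s; rewrite inE => /andP [_ /eqP ->].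
by rewrite sumr_const mulr_natl.
Qed.

End Col.

Lemma arith (R : realType) (x y p q S T : R) : 0 < x -> 0 < y -> 0 < p -> 0 < q ->
  0 <= S -> S <= T -> x * p <= y * q -> y^-1 * (q^-1 * S) <= x^-1 * (p^-1 * T).
Proof.
move=> x0 y0 p0 q0 S0 ST le.
rewrite !mulrA -!invfM; apply: ler_pM => //.
  by rewrite invr_ge0 ltW // mulr_gt0.
by rewrite lef_pV2 ?posrE ?mulr_gt0.
Qed.

Lemma pi_ge0 (R : realType) b k L (c : 'I_k) (s : coloring b k L) : 0 <= Defs.pi R c s.
Proof. by rewrite /Defs.pi; case: ifP => _ //; rewrite invr_ge0 ler0n. Qed.

Lemma sum_pi (R : realType) b k L (c : 'I_k) (F : coloring b k L -> R) :
  \sum_(s in Omega b L c) Defs.pi R c s * F s =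
  (#|Omega b L c|%:R)^-1 * \sum_(s in Omega b L c) F s.
Proof. by rewrite mulr_sumr; apply: eq_bigr => s Hs; rewrite /Defs.pi Hs. Qed.

Section Main.
Variables (R : realType) (b k m : nat) (c : 'I_k).

Lemma rcons_pf (w : vtx b m) (i : 'I_b) : (size (rcons (vseq w) i) < m.+2)%N.
Proof. by rewrite size_rcons ltnS ltnS size_vseq. Qed.

Lemma card_vtx_b : (b * #|{: vtx b m}| <= #|{: vtx b m.+1}|)%N.
Proof.
pose ch (p : 'I_b * vtx b m) : vtx b m.+1 := mkv (rcons_pf p.2 p.1).
have : injective ch.
  move=> [i1 w1] [i2 w2] /(congr1 (@vseq b m.+1)); rewrite /ch !vseq_mkv /=.
  by move/rcons_inj => [/vtx_eq -> ->].
by move/leq_card; rewrite card_prod card_ord.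
Qed.

Lemma card_vtx_le : (#|{: vtx b m}| <= #|{: vtx b m.+1}|)%N.
Proof. exact: leq_card (@emb_inj b m). Qed.

Lemma card_vtx_pos : (0 < #|{: vtx b m}|)%N.
Proof. by apply/card_gt0P; exists (rtm b m). Qed.

Lemma Q_le (f : coloring b k m -> R) s : (k <= b + 2)%N -> s \in Omega b m.+1 c ->
  Q c (fun s => f (r s)) s <= Q c f (r s).
Proof.
move=> kb Hs; have Hrs := r_Omega Hs.
rewrite (Q_eq _ Hs) (Q_eq _ Hrs).
rewrite (bigID (@small b m)) /=.
rewrite [X in _ * (_ + X)]big1 ?addr0; last first.
  move=> v nv; rewrite big1 ?mulr0 // => a _.
  by rewrite r_upd_nsmall // subrr expr2 mulr0.
rewrite (reindex_onto (@emb b m) (@proj b m)) /=; last by move=> v; exact: emb_proj.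
rewrite (eq_bigl (fun _ => true)); last by move=> w; rewrite small_emb proj_emb eqxx.
rewrite !mulr_sumr; apply: ler_sum => w _.
rewrite (eq_bigr (fun a => (f (r s) - f (upd (r s) w a))^+2)); last first.
  by move=> a _; rewrite r_upd_emb.
set D := fun a => (f (r s) - f (upd (r s) w a))^+2.
set Al := allowed c s (emb w); set Am := allowed c (r s) w.
have D0 a : 0 <= D a by rewrite /D sqr_ge0.
have sub := allowed_sub c s w.
have SlSm : \sum_(a in Al) D a <= \sum_(a in Am) D a.
  rewrite [X in _ <= X](big_setID Al) /= (finset.setIidPr sub) lerDl.
  by apply: sumr_ge0 => a _.
have Vl0 : (0 < #|{: vtx b m.+1}|)%N := leq_trans card_vtx_pos card_vtx_le.
have [lt2|ge2] := ltnP #|Al| 2.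
  rewrite big1 ?mulr0 ?mulr0.
    apply: mulr_ge0; first by rewrite invr_ge0 ler0n.
    apply: mulr_ge0; first by rewrite invr_ge0 ler0n.
    by apply: sumr_ge0 => a _; exact: sqr_ge0.
  move=> a Ha; move/card_le1_eqP: lt2 => H.
  have := H a (s (emb w)) Ha (own_allowed _ Hs) => <-.
  have -> : upd (r s) w (s (emb w)) = r s.
    apply/ffunP => u; rewrite /upd !ffunE; case: ifP => // /eqP ->.
    reflexivity.
  by rewrite subrr expr2 mulr0.
have AlAm := subset_leq_card sub.
apply: arith.
- by rewrite ltr0n card_vtx_pos.
- by rewrite ltr0n.
- by rewrite ltr0n (leq_trans _ AlAm) // (leq_trans _ ge2).
- by rewrite ltr0n (leq_trans _ ge2).
- by apply: sumr_ge0 => a _; exact: sqr_ge0.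
- exact: SlSm.
rewrite -!natrM ler_nat.
case: (ltnP (size (vseq w)) m) => sw.
  apply: leq_mul; first exact: card_vtx_le.
  exact: subset_leq_card (allowed_sup c s sw).
have := allowed_lt c (r s) w; have := card_vtx_b; have := card_vtx_le.
move: ge2 kb; rewrite -/Am.
set Vm := #|{: vtx b m}|; set Vl := #|{: vtx b m.+1}|; set am := #|Am|; set al := #|Al|.
move=> *; case: (posnP b) => [b0|bp]; nia.
Qed.

End Main.

Section Final.
Variables (R : realType) (b k m : nat) (c : 'I_k).

Lemma avg (t0 : coloring b k m) (F : coloring b k m -> R) : t0 \in Omega b m c ->
  \sum_(s in Omega b m.+1 c) Defs.pi R c s * F (r s) =
  \sum_(t in Omega b m c) Defs.pi R c t * F t.
Proof.
move=> H0; rewrite !sum_pi sum_fib.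
set N := #|fib c t0|.
have eN : forall (G : coloring b k m -> R),
    \sum_(t in Omega b m c) #|fib c t|%:R * G t = N%:R * \sum_(t in Omega b m c) G t.
  move=> G; rewrite mulr_sumr; apply: eq_bigr => t Ht; by rewrite (fib_eq Ht H0).
have cardE : (#|Omega b m.+1 c|%:R : R) = N%:R * #|Omega b m c|%:R.
  transitivity (\sum_(s in Omega b m.+1 c) (1 : R)); first by rewrite sumr_const.
  apply: etrans (sum_fib c (fun _ => (1 : R))) _.
  rewrite (eq_bigr (fun _ => N%:R)); first by rewrite sumr_const mulr_natr.
  by move=> t Ht; rewrite mulr1 (fib_eq Ht H0).
rewrite eN cardE invfM mulrA [_ * N%:R]mulrAC mulVf ?mul1r //.
by rewrite pnatr_eq0 -lt0n fib_pos.
Qed.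

Lemma Mean_eq (t0 : coloring b k m) (f : coloring b k m -> R) : t0 \in Omega b m c ->
  Mean c (fun s => f (r s)) = Mean c f.
Proof. by move=> H0; rewrite /Mean (avg _ H0). Qed.

Lemma Var_eq (t0 : coloring b k m) (f : coloring b k m -> R) : t0 \in Omega b m c ->
  Var c (fun s => f (r s)) = Var c f.
Proof.
move=> H0; rewrite /Var (Mean_eq _ H0).
exact: (avg (fun t => (f t - Mean c f) ^+ 2) H0).
Qed.

Lemma Var_ge0 L (h : coloring b k L -> R) : 0 <= Var c h.
Proof. by apply: sumr_ge0 => s _; apply: mulr_ge0; [exact: pi_ge0 | exact: sqr_ge0]. Qed.

Lemma Dir_le (t0 : coloring b k m) (f : coloring b k m -> R) : (k <= b + 2)%N ->
  t0 \in Omega b m c -> Dir c (fun s => f (r s)) <= Dir c f.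
Proof.
move=> kb H0; rewrite !Dir_Q; apply: ler_wpM2l; first by rewrite invr_ge0.
rewrite -(avg (Q c f) H0); apply: ler_sum => s Hs.
by apply: ler_wpM2l; [exact: pi_ge0 | exact: Q_le].
Qed.

End Final.

Theorem lemma15 (R : realType) (b k l : nat) (c : 'I_k) :
  (0 < l)%N -> (k <= b + 2)%N ->
  (c_gap R b l c <= c_gap R b l.-1 c)%E.
Proof.
move=> l0 kb; case: l l0 => [//|m] _ /=.
rewrite /c_gap; apply/ereal_infP => _ [f [s1 [s2 [H1 H2 Hne]]] <-].
apply: ge_ereal_inf.
exists ((Dir c (fun s => f (r s)) / Var c (fun s => f (r s)))%:E).
  exists (fun s => f (r s)) => //.
  have /card_gt0P [x1] := fib_pos H1; have /card_gt0P [x2] := fib_pos H2.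
  rewrite !inE => /andP [Hx2 /eqP e2] /andP [Hx1 /eqP e1].
  by exists x1, x2; split; rewrite // ?inE // e1 e2.
rewrite lee_fin (Var_eq _ H1); apply: ler_wpM2r; first by rewrite invr_ge0 Var_ge0.
exact: Dir_le kb H1.
Qed.
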